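(* Let $D$ be a digraph of order $n$ and let $k\ge 2$ be an integer with $k\le n$. Then: (1) if $k\le n-1$, then $\lambda_{k+1}(D)\le \lambda_k(D)$; (2) if $D'$ is a spanning subgraph of $D$, then $\lambda_k(D')\le \lambda_k(D)$; (3) $\kappa_k(D)\le \lambda_k(D)\le \min\{\delta^+(D),\delta^-(D)\}$.
   Context: Digraphs are finite, without loops or parallel arcs. For $S\subseteq V(D)$, $\lambda_S(D)$ is the maximum number of pairwise arc-disjoint strong subgraphs of $D$ containing $S$, and $\lambda_k(D)=\min\{\lambda_S(D): S\subseteq V(D), |S|=k\}$ (strong subgraph $k$-arc-connectivity). Strong subgraphs $D_1,\dots,D_p$ containing $S$ are internally disjoint if $V(D_i)\cap V(D_j)=S$ and $A(D_i)\cap A(D_j)=\emptyset$ for all $i\ne j$; $\kappa_S(D)$ is the maximum number of internally disjoint strong subgraphs containing $S$, and $\kappa_k(D)=\min\{\kappa_S(D): S\subseteq V(D),|S|=k\}$. $\delta^+(D)$ and $\delta^-(D)$ denote the minimum out-degree and minimum in-degree of $D$. *)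

(* Defs.v *)
From mathcomp Require Import all_boot.
Set Implicit Arguments. Unset Strict Implicit. Unset Printing Implicit Defensive.

(* A digraph on the finite vertex type V is an arc relation D : rel V
   (no parallel arcs by construction); it is loopless when [irreflexive D].
   A subgraph H of D is a pair (X, A) of a vertex set and an arc set. *)

Definition subgraph_of (V : finType) (D : rel V) (H : {set V} * {set V * V}) :=
  [forall a in H.2, [&& D a.1 a.2, a.1 \in H.1 & a.2 \in H.1]].

Definition strongb (V : finType) (H : {set V} * {set V * V}) :=
  [forall x in H.1, forall y in H.1, connect [rel u v | (u, v) \in H.2] x y].

Definition strong_sub_containing (V : finType) (D : rel V) (S : {set V})
    (H : {set V} * {set V * V}) :=
  [&& subgraph_of D H, strongb H & S \subset H.1].

Definition arc_disj_family (V : finType) (D : rel V) (S : {set V}) (p : nat) :=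
  [exists F : {ffun 'I_p -> {set V} * {set V * V}},
     [forall i, strong_sub_containing D S (F i)] &&
     [forall i, forall j, (i != j) ==> [disjoint (F i).2 & (F j).2]]].

Definition int_disj_family (V : finType) (D : rel V) (S : {set V}) (p : nat) :=
  [exists F : {ffun 'I_p -> {set V} * {set V * V}},
     [forall i, strong_sub_containing D S (F i)] &&
     [forall i, forall j, (i != j) ==>
        (((F i).1 :&: (F j).1 == S) && [disjoint (F i).2 & (F j).2])]].

(* Maxima: for |S| >= 2 every such subgraph has an arc, so p <= #|V * V|;
   the maximum is therefore taken over p <= #|V * V|. *)
Definition lambdaS (V : finType) (D : rel V) (S : {set V}) : nat :=
  \max_(p < #|{: V * V}|.+1 | arc_disj_family D S p) p.

Definition kappaS (V : finType) (D : rel V) (S : {set V}) : nat :=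
  \max_(p < #|{: V * V}|.+1 | int_disj_family D S p) p.

(* minimum over all k-subsets S (default #|V*V| is never used when k <= #|V|) *)
Definition lambda_k (V : finType) (D : rel V) (k : nat) : nat :=
  \big[minn/#|{: V * V}|]_(S : {set V} | #|S| == k) lambdaS D S.

Definition kappa_k (V : finType) (D : rel V) (k : nat) : nat :=
  \big[minn/#|{: V * V}|]_(S : {set V} | #|S| == k) kappaS D S.

Definition min_outdeg (V : finType) (D : rel V) : nat :=
  \big[minn/#|V|]_(v : V) #|[set w | D v w]|.

Definition min_indeg (V : finType) (D : rel V) : nat :=
  \big[minn/#|V|]_(v : V) #|[set w | D w v]|.

(* Main.v *)
Require Import Defs.
From mathcomp Require Import all_boot.
From mathcomp Require Import zify.
Set Implicit Arguments. Unset Strict Implicit.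

Lemma le_bigmin (I : finType) (P : pred I) (F : I -> nat) m X :
  X <= m -> (forall i, P i -> X <= F i) -> X <= \big[minn/m]_(i | P i) F i.
Proof.
move=> Hm HF; apply: (big_ind (fun y => X <= y)) => //.
by move=> a b Ha Hb; rewrite leq_min Ha Hb.
Qed.

Lemma bigmin_le (I : finType) (P : pred I) (F : I -> nat) m i :
  P i -> \big[minn/m]_(j | P j) F j <= F i.
Proof.
move=> Pi; have : i \in index_enum I by rewrite mem_index_enum.
elim: (index_enum I) => [//|a r IH]; rewrite big_cons inE => /orP [/eqP <-|Hr].
  by rewrite Pi geq_minl.
by case: (P a); rewrite ?geq_min IH ?orbT.
Qed.

Lemma bigmin_idx (I : finType) (P : pred I) (F : I -> nat) m :
  \big[minn/m]_(j | P j) F j <= m.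
Proof.
elim: (index_enum I) => [|a r IH]; rewrite ?big_nil ?big_cons //.
by case: (P a); rewrite // geq_min IH orbT.
Qed.

Lemma max_mono n (P Q : pred 'I_n) :
  (forall i, P i -> Q i) -> \max_(i | P i) (i : nat) <= \max_(i | Q i) (i : nat).
Proof.
move=> H; apply/bigmax_leqP => i Pi; exact: leq_bigmax_cond (H _ Pi).
Qed.

Lemma fam_mono (V : finType) (D D' : rel V) (S S' : {set V}) p :
  (forall H, strong_sub_containing D S H -> strong_sub_containing D' S' H) ->
  arc_disj_family D S p -> arc_disj_family D' S' p.
Proof.
move=> HH /existsP [F /andP [/forallP H1 H2]].
apply/existsP; exists F; rewrite H2 andbT; apply/forallP => i; exact: HH.
Qed.

Lemma lambdaS_mono (V : finType) (D D' : rel V) (S S' : {set V}) :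
  (forall H, strong_sub_containing D S H -> strong_sub_containing D' S' H) ->
  lambdaS D S <= lambdaS D' S'.
Proof. by move=> HH; apply: max_mono => i; apply: fam_mono. Qed.

Lemma out_arc (V : finType) (H : {set V} * {set V * V}) x y :
  strongb H -> x \in H.1 -> y \in H.1 -> x != y ->
  (exists w, (x, w) \in H.2) /\ (exists w, (w, y) \in H.2).
Proof.
move=> /forallP /(_ x) /implyP Hs Hx Hy Hxy.
move: (Hs Hx) => /forallP /(_ y) /implyP /(_ Hy) /connectP [p Hp Hl].
split.
- case: p Hp Hl => [|w p] /=; first by move=> _ E; rewrite E eqxx in Hxy.
  by move=> /andP [Hw _] _; exists w.
- move: Hp Hl; case/lastP: p => [|p w] /=; first by move=> _ E; rewrite E eqxx in Hxy.
  rewrite rcons_path last_rcons => /andP [_ Hw] E; exists (last x p); by rewrite E.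
Qed.

Lemma lambdaS_deg (V : finType) (D : rel V) (S : {set V}) v u :
  v \in S -> u \in S -> u != v ->
  lambdaS D S <= #|[set w | D v w]| /\ lambdaS D S <= #|[set w | D w v]|.
Proof.
move=> Hv Hu Huv.
have key : forall p, arc_disj_family D S p ->
    p <= #|[set w | D v w]| /\ p <= #|[set w | D w v]|.
  move=> p /existsP [F /andP [/forallP H1 /forallP H2]].
  have Hi : forall i, (exists w, (v, w) \in (F i).2) /\ (exists w, (w, v) \in (F i).2).
    move=> i; move: (H1 i) => /and3P [_ Hst Hsub].
    have [[w1 Hw1] _] := out_arc Hst (subsetP Hsub _ Hv) (subsetP Hsub _ Hu)
                          (ltac:(by rewrite eq_sym)).
    have [_ [w2 Hw2]] := out_arc Hst (subsetP Hsub _ Hu) (subsetP Hsub _ Hv) Huv.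
    by split; [exists w1 | exists w2].
  have disj : forall i j a, a \in (F i).2 -> a \in (F j).2 -> i = j.
    move=> i j a Ai Aj; apply/eqP; apply/negPn/negP => Hij.
    move: (H2 i) => /forallP /(_ j) /implyP /(_ Hij) /disjointFr /(_ Ai).
    by rewrite Aj.
  have subD : forall i a, a \in (F i).2 -> D a.1 a.2.
    move=> i a Ha; move: (H1 i) => /and3P [/forallP /(_ a) /implyP /(_ Ha) /and3P [] //].
  split.
  - pose f i := odflt v [pick w | (v, w) \in (F i).2].
    have Hf : forall i, (v, f i) \in (F i).2.
      move=> i; rewrite /f; case: pickP => [w //|Hn] /=.
      by have [[w Hw] _] := Hi i; move: (Hn w); rewrite Hw.
    have inj : injective f by move=> i j E; apply: (disj i j (v, f i)); rewrite // E.
    rewrite -[p]card_ord -(card_imset _ inj); apply: subset_leq_card.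
    apply/subsetP => w /imsetP [i _ ->]; rewrite inE; exact: (subD i _ (Hf i)).
  - pose f i := odflt v [pick w | (w, v) \in (F i).2].
    have Hf : forall i, (f i, v) \in (F i).2.
      move=> i; rewrite /f; case: pickP => [w //|Hn] /=.
      by have [_ [w Hw]] := Hi i; move: (Hn w); rewrite Hw.
    have inj : injective f by move=> i j E; apply: (disj i j (f i, v)); rewrite // E.
    rewrite -[p]card_ord -(card_imset _ inj); apply: subset_leq_card.
    apply/subsetP => w /imsetP [i _ ->]; rewrite inE; exact: (subD i _ (Hf i)).
split; apply/bigmax_leqP => i Pi; by have [] := key _ Pi.
Qed.

Lemma exists_out (V : finType) (S : {set V}) :
  #|S| < #|V| -> exists x, x \notin S.
Proof.
move=> H; case: (pickP [pred x | x \notin S]) => [x Hx|H0]; first by exists x.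
have : [set: V] \subset S by apply/subsetP => x _; move: (H0 x) => /= /negbFE.
by move/subset_leq_card; rewrite cardsT leqNgt H.
Qed.

Lemma exists_superset (V : finType) (A : {set V}) d :
  #|A| + d <= #|V| -> exists S : {set V}, (A \subset S) && (#|S| == #|A| + d).
Proof.
elim: d => [|d IH] H; first by exists A; rewrite subxx addn0 eqxx.
have H' : #|A| + d <= #|V| by apply: leq_trans H; rewrite leq_add2l.
have [S /andP [HS /eqP Hc]] := IH H'.
have [x Hx] : exists x, x \notin S by apply: exists_out; rewrite Hc; apply: leq_trans H; rewrite addnS.
exists (x |: S); rewrite cardsU1 Hx Hc addnS add1n eqxx andbT.
by apply: subset_trans HS (subsetUr _ _).
Qed.

Theorem proposition3p1 (V : finType) (D : rel V) (n k : nat) :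
  irreflexive D -> #|V| = n -> 2 <= k -> k <= n ->
  [/\ (k <= n - 1 -> lambda_k D k.+1 <= lambda_k D k),
      (forall D' : rel V, irreflexive D' -> subrel D' D ->
         lambda_k D' k <= lambda_k D k)
    & kappa_k D k <= lambda_k D k /\
      lambda_k D k <= minn (min_outdeg D) (min_indeg D)].
Proof.
move=> Dirr Hn Hk Hkn; split.
- move=> Hk1; apply: le_bigmin; first exact: bigmin_idx.
  move=> S /eqP HS.
  have [x Hx] : exists x, x \notin S.
    by apply: exists_out; rewrite HS Hn; lia.
  apply: leq_trans (bigmin_le _ _ (_ : #|x |: S| == k.+1)) _.
    by rewrite cardsU1 Hx HS.
  apply: lambdaS_mono => H /and3P [H1 H2 H3].
  by rewrite /strong_sub_containing H1 H2 (subset_trans (subsetUr _ _) H3).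
- move=> D' _ HD'; apply: le_bigmin; first exact: bigmin_idx.
  move=> S HS; apply: leq_trans (bigmin_le _ _ HS) _.
  apply: lambdaS_mono => H /and3P [H1 H2 H3].
  apply/and3P; split => //.
  apply/forallP => a; apply/implyP => Ha.
  by move: H1 => /forallP /(_ a) /implyP /(_ Ha) /and3P [/HD' -> -> ->].
- split.
  + apply: le_bigmin; first exact: bigmin_idx.
    move=> S HS; apply: leq_trans (bigmin_le _ _ HS) _.
    apply: max_mono => i /existsP [F /andP [H1 /forallP H2]].
    apply/existsP; exists F; rewrite H1 /=; apply/forallP => a; apply/forallP => b.
    by apply/implyP => Hab; move: (H2 a) => /forallP /(_ b) /implyP /(_ Hab) /andP [].
  + have key : forall v, lambda_k D k <= #|[set w | D v w]| /\ lambda_k D k <= #|[set w | D w v]|.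
      move=> v.
      have Hsz : #|[set v]| + k.-1 <= #|V| by rewrite cards1; lia.
      have [S /andP [HvS /eqP HS]] := exists_superset Hsz.
      rewrite cards1 in HS; have {}HS : #|S| = k by lia.
      have Hv : v \in S by rewrite (subsetP HvS) ?set11.
      have : 0 < #|S :\ v|.
        by move: (cardsD1 v S); rewrite Hv HS add1n => E; rewrite -ltnS -E.
      case/card_gt0P => u; rewrite !inE => /andP [Huv Hu].
      have [L1 L2] := lambdaS_deg D Hv Hu Huv.
      have Hm : lambda_k D k <= lambdaS D S by apply: bigmin_le; rewrite HS.
      by split; apply: leq_trans Hm _.
    have : 0 < #|V| by lia.
    case/card_gt0P => v0 _.
    rewrite leq_min; apply/andP; split; apply: le_bigmin => [|v _].
    * by apply: leq_trans (proj1 (key v0)) (max_card _).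
    * exact: (proj1 (key v)).
    * by apply: leq_trans (proj2 (key v0)) (max_card _).
    * exact: (proj2 (key v)).
Qed.
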